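(* Consider the single-element, single-slab periodic space-time SBP scheme: unknowns $\boldsymbol\rho,\boldsymbol g_1,\dots,\boldsymbol g_{n_v}\in\mathbb R^{(n_t+1)(n_x+1)}$ satisfying $$\mathsf D_t\boldsymbol\rho+\tilde{\mathsf D}_x\langle v\boldsymbol g\rangle=-\sigma_a\boldsymbol\rho-\mathsf H_t^{-1}\mathsf t_B\mathsf t_B^\top(\boldsymbol\rho-\boldsymbol\rho(0)),$$ $$\mathsf D_t\boldsymbol g_k+\tfrac{v_k}{\varepsilon}\tilde{\mathsf D}_x\boldsymbol g_k-\tfrac1\varepsilon\langle v\tilde{\mathsf D}_x\boldsymbol g\rangle+\tfrac{v_k}{\varepsilon^2}\tilde{\mathsf D}_x\boldsymbol\rho=-\Big(\tfrac{\sigma_s}{\varepsilon^2}+\sigma_a\Big)\boldsymbol g_k-\mathsf H_t^{-1}\mathsf t_B\mathsf t_B^\top(\boldsymbol g_k-\boldsymbol g_k(0)),\quad k=1,\dots,n_v,$$ where the initial data satisfy $\langle\boldsymbol g(0)\rangle=0$. Then every solution satisfies $\langle\boldsymbol g\rangle=\sum_{k=1}^{n_v}\omega_k\boldsymbol g_k=0$.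
   Context: SBP operators: on nodes $x_0<\dots<x_n$, a matrix $\bar{\mathsf D}$ is a degree-$p$ SBP approximation of $d/dx$ if $\bar{\mathsf D}\boldsymbol x^k=k\boldsymbol x^{k-1}$ for $0\le k\le p$ (with $\boldsymbol x^k$ the vector of $x_i^k$), $\bar{\mathsf D}=\bar{\mathsf H}^{-1}\bar{\mathsf Q}$ with $\bar{\mathsf H}$ symmetric positive definite (here always diagonal), and $\bar{\mathsf Q}+\bar{\mathsf Q}^\top=\bar{\mathsf E}=\bar{\boldsymbol t}_R\bar{\boldsymbol t}_R^\top-\bar{\boldsymbol t}_L\bar{\boldsymbol t}_L^\top=\mathrm{diag}(-1,0,\dots,0,1)$, $\bar{\boldsymbol t}_L=(1,0,\dots,0)^\top$, $\bar{\boldsymbol t}_R=(0,\dots,0,1)^\top$. Let $\bar{\mathsf D}_x=\bar{\mathsf H}_x^{-1}\bar{\mathsf Q}_x$ be such an operator on $n_x+1$ spatial nodes (boundary vectors $\bar{\boldsymbol t}_L,\bar{\boldsymbol t}_R$) and $\bar{\mathsf D}_t=\bar{\mathsf H}_t^{-1}\bar{\mathsf Q}_t$ one on $n_t+1$ temporal nodes, with boundary vectors $\bar{\boldsymbol t}_B=(1,0,\dots,0)^\top$, $\bar{\boldsymbol t}_T=(0,\dots,0,1)^\top$. With $\mathsf I_{n_x},\mathsf I_{n_t}$ identities of size $n_x+1,n_t+1$: $\mathsf D_t=\bar{\mathsf D}_t\otimes\mathsf I_{n_x}$, $\mathsf D_x=\mathsf I_{n_t}\otimes\bar{\mathsf D}_x$,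 $\mathsf H=\bar{\mathsf H}_t\otimes\bar{\mathsf H}_x$, $\mathsf Q_t=\bar{\mathsf Q}_t\otimes\bar{\mathsf H}_x$, $\mathsf H_t=\bar{\mathsf H}_t\otimes\mathsf I_{n_x}$, $\mathsf H_x=\mathsf I_{n_t}\otimes\bar{\mathsf H}_x$, $\mathsf t_R=\mathsf I_{n_t}\otimes\bar{\boldsymbol t}_R$, $\mathsf t_L=\mathsf I_{n_t}\otimes\bar{\boldsymbol t}_L$, $\mathsf t_B=\bar{\boldsymbol t}_B\otimes\mathsf I_{n_x}$, $\mathsf t_T=\bar{\boldsymbol t}_T\otimes\mathsf I_{n_x}$. The periodic operator is $\tilde{\mathsf D}_x=\mathsf D_x-\frac12\mathsf H_x^{-1}\big(\mathsf t_R(\mathsf t_R^\top-\mathsf t_L^\top)-\mathsf t_L(\mathsf t_L^\top-\mathsf t_R^\top)\big)$. Velocity discretization: nodes $v_1,\dots,v_{n_v}$ and weights $\omega_k$ with $\sum_k\omega_k=1$ and $\sum_k\omega_kv_k=0$; for vectors indexed by $k$, $\langle\boldsymbol a\rangle=\sum_k\omega_k\boldsymbol a_k$ (e.g. $\langle v\boldsymbol g\rangle=\sum_k\omega_kv_k\boldsymbol g_k$, $\langle v\tilde{\mathsf D}_x\boldsymbol g\rangle=\sum_k\omega_kv_k\tilde{\mathsf D}_x\boldsymbol g_k$). Parameters: $\varepsilon>0$, $\sigma_s>0$, $\sigma_a\ge0$. $\boldsymbol\rho(0),\boldsymbol g_k(0)$ are given vectors representing the initial data. *)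

(* Defs.v *)
From mathcomp Require Import all_boot all_order all_algebra.
From mathcomp Require Export mxtens.
Set Implicit Arguments. Unset Strict Implicit. Unset Printing Implicit Defensive.
Import Order.TTheory GRing.Theory Num.Theory.
Local Open Scope ring_scope.

Section Defs.
Variable R : realFieldType.

(* boundary vectors on n+1 nodes: t_L = t_B = e_0, t_R = t_T = e_n *)
Definition tLv (n : nat) : 'cV[R]_n.+1 := \col_i (i == ord0)%:R.
Definition tRv (n : nat) : 'cV[R]_n.+1 := \col_i (i == ord_max)%:R.

Definition xpow (n : nat) (x : 'I_n.+1 -> R) (k : nat) : 'cV[R]_n.+1 :=
  \col_i (x i ^+ k).

Definition SBP (n : nat) (x : 'I_n.+1 -> R) (p : nat) (H Q : 'M[R]_n.+1) : Prop :=
  [/\ (forall i j : 'I_n.+1, (i < j)%N -> x i < x j),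
      is_diag_mx H,
      (forall i, 0 < H i i),
      Q + Q^T = tRv n *m (tRv n)^T - tLv n *m (tLv n)^T
    & forall k, (k <= p)%N -> (invmx H *m Q) *m xpow x k = k%:R *: xpow x k.-1].

(* space-time operators; unknown vectors have (n_t+1)(n_x+1) entries,
   indexed time-major as in the Kronecker product. *)
Definition Dtime nt nx (Ht Qt : 'M[R]_nt.+1) : 'M[R]_(nt.+1 * nx.+1) :=
  (invmx Ht *m Qt) *t (1%:M : 'M[R]_nx.+1).
Definition Dspace nt nx (Hx Qx : 'M[R]_nx.+1) : 'M[R]_(nt.+1 * nx.+1) :=
  (1%:M : 'M[R]_nt.+1) *t (invmx Hx *m Qx).
Definition Htime nt nx (Ht : 'M[R]_nt.+1) : 'M[R]_(nt.+1 * nx.+1) :=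
  Ht *t (1%:M : 'M[R]_nx.+1).
Definition Hspace nt nx (Hx : 'M[R]_nx.+1) : 'M[R]_(nt.+1 * nx.+1) :=
  (1%:M : 'M[R]_nt.+1) *t Hx.
Definition tRst nt nx : 'M[R]_(nt.+1 * nx.+1, nt.+1 * 1) :=
  (1%:M : 'M[R]_nt.+1) *t tRv nx.
Definition tLst nt nx : 'M[R]_(nt.+1 * nx.+1, nt.+1 * 1) :=
  (1%:M : 'M[R]_nt.+1) *t tLv nx.
Definition tBst nt nx : 'M[R]_(nt.+1 * nx.+1, 1 * nx.+1) :=
  tLv nt *t (1%:M : 'M[R]_nx.+1).
Definition tTst nt nx : 'M[R]_(nt.+1 * nx.+1, 1 * nx.+1) :=
  tRv nt *t (1%:M : 'M[R]_nx.+1).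

Definition Dperiodic nt nx (Hx Qx : 'M[R]_nx.+1) : 'M[R]_(nt.+1 * nx.+1) :=
  Dspace nt Hx Qx - 2^-1 *: (invmx (Hspace nt Hx) *m
     (tRst nt nx *m ((tRst nt nx)^T - (tLst nt nx)^T)
      - tLst nt nx *m ((tLst nt nx)^T - (tRst nt nx)^T))).

Definition SATbottom nt nx (Ht : 'M[R]_nt.+1) : 'M[R]_(nt.+1 * nx.+1) :=
  invmx (Htime nx Ht) *m tBst nt nx *m (tBst nt nx)^T.

Definition vavg nv m (w : 'I_nv -> R) (a : 'I_nv -> 'cV[R]_m) : 'cV[R]_m :=
  \sum_(k < nv) w k *: a k.

End Defs.

(* Main.v *)
Require Import Defs.
From mathcomp Require Import all_boot all_order all_algebra.
From mathcomp Require Import ring lra.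
Import Order.TTheory GRing.Theory Num.Theory.
Local Open Scope ring_scope.

Section Aux.
Variable R : realFieldType.

Lemma ker_unit n (B : 'M[R]_n) :
  (forall y : 'cV[R]_n, B *m y = 0 -> y = 0) -> B \in unitmx.
Proof.
move=> H; rewrite -unitmx_tr -row_free_unit -kermx_eq0; apply/eqP.
apply/row_matrixP => i; rewrite row0.
have K := mulmx_ker B^T.
have : row i (kermx B^T) *m B^T = 0 by rewrite -row_mul K row0.
move/(congr1 trmx); rewrite trmx_mul trmxK trmx0 => /H /(congr1 trmx).
by rewrite trmxK trmx0.
Qed.

Lemma diag_mul n (H : 'M[R]_n) (y : 'cV[R]_n) i :
  is_diag_mx H -> (H *m y) i 0 = H i i * y i 0.
Proof.
move=> /is_diag_mxP D; rewrite mxE (bigD1 i) //= big1 ?addr0 // => j ji.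
by rewrite D ?mul0r // eq_sym.
Qed.

Lemma m11 (M : 'M[R]_1) : M^T = M.
Proof. by apply/matrixP => i j; rewrite !ord1 mxE. Qed.

Lemma mul11 (a b : 'M[R]_1) : (a *m b) 0 0 = a 0 0 * b 0 0.
Proof. by rewrite mxE big_ord1. Qed.

Lemma energy_unit n (H Q : 'M[R]_n.+1) (c : R) :
  is_diag_mx H -> (forall i, 0 < H i i) -> 0 < c ->
  Q + Q^T = tRv R n *m (tRv R n)^T - tLv R n *m (tLv R n)^T ->
  (Q + tLv R n *m (tLv R n)^T + c *: H) \in unitmx.
Proof.
move=> dH pH c0 EQ; apply: ker_unit => y Ky.
set sR := (tRv R n)^T *m y; set sL := (tLv R n)^T *m y.
have z0 : (y^T *m ((Q + tLv R n *m (tLv R n)^T + c *: H) *m y)) = 0.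
  by rewrite Ky mulmx0.
have q2 : (y^T *m (Q *m y)) *+ 2 = sR^T *m sR - sL^T *m sL.
  have t1 : y^T *m (Q^T *m y) = y^T *m (Q *m y).
    by rewrite -[RHS]m11 !trmx_mul trmxK mulmxA.
  rewrite mulr2n -{2}t1 -mulmxDr -mulmxDl EQ mulmxBl mulmxBr.
  by rewrite /sR /sL !trmx_mul !trmxK !mulmxA.
have zE : y^T *m ((Q + tLv R n *m (tLv R n)^T + c *: H) *m y) =
   y^T *m (Q *m y) + sL^T *m sL + c *: (y^T *m (H *m y)).
  rewrite !mulmxDl !mulmxDr /sL trmx_mul trmxK !mulmxA.
  by rewrite -scalemxAr -scalemxAl.
clearbody sR sL.
have hq : \sum_j y^T 0 j * (H *m y) j 0 = \sum_i H i i * y i 0 ^+ 2.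
  apply: eq_bigr => i _; rewrite diag_mul // mxE; ring.
have e2 := congr1 (fun M : 'M[R]_1 => (M *+ 2) 0 0) z0.
rewrite /= zE !mulrnDl q2 !mxE hq !big_ord1 !mxE in e2.
set s := \sum_i _ in e2.
have s0 : 0 <= s by apply: sumr_ge0 => i _; rewrite mulr_ge0 ?sqr_ge0 ?ltW.
have ss : s = 0.
  have a1 := sqr_ge0 (sR 0 0); have a2 := sqr_ge0 (sL 0 0).
  rewrite !expr2 in a1 a2.
  move: e2; nra.
apply/matrixP => i j; rewrite !ord1 mxE.
have : H i i * y i 0 ^+ 2 = 0.
  apply: (psumr_eq0P _ ss) => // k _.
  by rewrite mulr_ge0 ?sqr_ge0 ?ltW.
move/eqP; rewrite mulf_eq0 (gt_eqF (pH i)) /= sqrf_eq0 => /eqP //.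
Qed.

Lemma tensDl m n p q (A B : 'M[R]_(m,n)) (C : 'M[R]_(p,q)) :
  (A + B) *t C = A *t C + B *t C.
Proof. by apply/matrixP => i j; rewrite !mxE mulrDl. Qed.

Lemma tensZl m n p q (a : R) (A : 'M[R]_(m,n)) (C : 'M[R]_(p,q)) :
  (a *: A) *t C = a *: (A *t C).
Proof. by apply/matrixP => i j; rewrite !mxE mulrA. Qed.

End Aux.

Theorem theorem3p2 (R : realFieldType) (nx nt p_x p_t nv : nat)
  (xs : 'I_nx.+1 -> R) (Hxb Qxb : 'M[R]_nx.+1)
  (ts : 'I_nt.+1 -> R) (Htb Qtb : 'M[R]_nt.+1)
  (v w : 'I_nv -> R) (eps sigma_s sigma_a : R)
  (rho rho0 : 'cV[R]_(nt.+1 * nx.+1)) (g g0 : 'I_nv -> 'cV[R]_(nt.+1 * nx.+1)) :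
  SBP xs p_x Hxb Qxb ->
  SBP ts p_t Htb Qtb ->
  \sum_(k < nv) w k = 1 ->
  \sum_(k < nv) w k * v k = 0 ->
  0 < eps -> 0 < sigma_s -> 0 <= sigma_a ->
  vavg w g0 = 0 ->
  let Dt := Dtime nx Htb Qtb in
  let Dxt := Dperiodic nt Hxb Qxb in
  let S := SATbottom nx Htb in
  Dt *m rho + Dxt *m vavg w (fun k => v k *: g k)
    = - (sigma_a *: rho) - S *m (rho - rho0) ->
  (forall k : 'I_nv,
     Dt *m g k + (v k / eps) *: (Dxt *m g k)
     - eps^-1 *: vavg w (fun j => v j *: (Dxt *m g j))
     + (v k / eps ^+ 2) *: (Dxt *m rho)
     = - ((sigma_s / eps ^+ 2 + sigma_a) *: g k) - S *m (g k - g0 k)) ->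
  vavg w g = 0.
Proof.
move=> _ [_ dHt pHt EQt _] sw swv eps0 ss0 sa0 g00 Dt Dxt S _ Eg.
set c := sigma_s / eps ^+ 2 + sigma_a.
have c0 : 0 < c.
  have : 0 < sigma_s / eps ^+ 2 by rewrite divr_gt0 // exprn_gt0.
  rewrite /c; lra.
set X := vavg w (fun j => v j *: (Dxt *m g j)).
set G := vavg w g.
have lin : forall (A : 'M[R]_(nt.+1 * nx.+1)) (f : 'I_nv -> 'cV[R]_(nt.+1 * nx.+1)),
    \sum_k w k *: (A *m f k) = A *m vavg w f.
  by move=> A f; rewrite /vavg mulmx_sumr; apply: eq_bigr => k _; rewrite scalemxAr.
have Ek : forall k, Dt *m g k + c *: g k + S *m g k =
   S *m g0 k + eps^-1 *: X - (v k / eps) *: (Dxt *m g k)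
     - (v k / eps ^+ 2) *: (Dxt *m rho).
  move=> k; have := Eg k; rewrite mulmxBr -/X -/c.
  move: (Dt *m g k) (Dxt *m g k) (Dxt *m rho) (S *m g k) (S *m g0 k) X (g k).
  move=> a b d e f x y E; apply/matrixP => i j.
  have := congr1 (fun M : 'cV[R]_(nt.+1 * nx.+1) => M i j) E; rewrite !mxE => E'.
  lra.
have L1 : \sum_(k < nv) w k *: (Dt *m g k + c *: g k + S *m g k) =
    Dt *m G + c *: G + S *m G.
  rewrite (eq_bigr (fun k => w k *: (Dt *m g k) + c *: (w k *: g k) + w k *: (S *m g k)));
    last by move=> k _; rewrite !scalerDr !scalerA mulrC.
  by rewrite !big_split /= !lin -scaler_sumr.
have L2 : \sum_(k < nv) w k *: (S *m g0 k + eps^-1 *: X - (v k / eps) *: (Dxt *m g k)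
     - (v k / eps ^+ 2) *: (Dxt *m rho)) = 0.
  rewrite (eq_bigr (fun k => w k *: (S *m g0 k) + w k *: (eps^-1 *: X)
     - eps^-1 *: (w k *: (v k *: (Dxt *m g k))) - (w k * (v k / eps ^+ 2)) *: (Dxt *m rho)));
    last by move=> k _; rewrite !scalerDr !scalerN !scalerA; congr (_ + _ - _ - _); congr (_ *: _); ring.
  rewrite !big_split /= !sumrN !lin -!scaler_sumr -!scaler_suml.
  rewrite sw scale1r g00 mulmx0 add0r.
  have hs : \sum_(i < nv) w i * (v i / eps ^+ 2) = 0.
    under eq_bigr do rewrite mulrA.
    by rewrite -mulr_suml swv mul0r.
  rewrite hs scale0r subr0.
  by rewrite /X /vavg subrr.
have EG : Dt *m G + c *: G + S *m G = 0.
  by rewrite -L1 -[RHS]L2; apply: eq_bigr => k _; rewrite Ek.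
have HtU : Htb \in unitmx.
  apply: ker_unit => y Hy; apply/matrixP => i j; rewrite !ord1 mxE.
  have := congr1 (fun M : 'cV[R]_nt.+1 => M i 0) Hy.
  rewrite /= diag_mul // mxE => /eqP; rewrite mulf_eq0 (gt_eqF (pHt i)) /= => /eqP //.
have HU : (Htb *t (1%:M : 'M[R]_nx.+1)) \in unitmx.
  by apply: tensmx_unit => //; exact: unitmx1.
set Kt := Qtb + tLv R nt *m (tLv R nt)^T + c *: Htb.
have KU : (Kt *t (1%:M : 'M[R]_nx.+1)) \in unitmx.
  by apply: tensmx_unit => //; [exact: energy_unit | exact: unitmx1].
have KG : (Kt *t (1%:M : 'M[R]_nx.+1)) *m G = 0.
  have := congr1 (fun M => (Htb *t (1%:M : 'M[R]_nx.+1)) *m M) EG.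
  rewrite /= mulmx0 !mulmxDr !mulmxA -scalemxAr.
  rewrite /Htime mulmxV // mul1mx /Dt /Dtime tensmx_mul mulKVmx // mulmx1.
  rewrite /tBst trmx_tens tensmx_mul trmx1 mulmx1.
  by rewrite /Kt !tensDl tensZl !mulmxDl -scalemxAl addrAC.
by rewrite -[G](mulKmx KU) KG mulmx0.
Qed.
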